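(* For any $\rho\in(0,\frac\pi2)$ and all $\tilde\theta\in\mathbb S(\rho)$, $$\sin(\rho)\lambda_2I\le\nabla^2U(\tilde\theta)\le\lambda_NI,$$ where $\lambda_2$ and $\lambda_N$ are the second-smallest and largest eigenvalues of $M^{-1}L_B$, respectively.
   Context: Let $(\mathcal N,\mathcal E)$ be a connected undirected graph, $\mathcal N=\{1,\dots,N\}$, $E=|\mathcal E|$, with edge weights $B^0_{ij}>0$. Fix an edge orientation, let $A\in\mathbb R^{N\times E}$ be the node-edge incidence matrix, $\Gamma=\mathrm{diag}(B^0_{ij},\{i,j\}\in\mathcal E)$ and $L_B=A\Gamma A^T$. Let $M=\mathrm{diag}(M_1,\dots,M_N)$ with $M_i>0$ and $Y\in\mathbb R^{N\times(N-1)}$ a matrix whose columns form an orthonormal basis of the null space of $\mathbb 1_N^TM^{1/2}$. Define $U(\tilde\theta):=-\mathbb 1_E^T\Gamma\cos(A^TM^{-1/2}Y\tilde\theta)$ for $\tilde\theta\in\mathbb R^{N-1}$ (cosine elementwise), whose Hessian is $\nabla^2U(\tilde\theta)=Y^TM^{-1/2}A\,\mathrm{diag}(\Gamma\cos(A^TM^{-1/2}Y\tilde\theta))A^TM^{-1/2}Y$. For $\rho\in(0,\frac\pi2)$, $\mathbb S(\rho):=\{\tilde\theta:\max_l|(A^TM^{-1/2}Y\tilde\theta)_l|<\frac\pi2-\rho\}$. For symmetric matrices, $A\le B$ means $B-A$ is positive semidefinite. *)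

(* Defs.v *)
From HB Require Import structures.
From mathcomp Require Import all_boot all_order all_algebra.
From mathcomp Require Import reals trigo.
Set Implicit Arguments. Unset Strict Implicit. Unset Printing Implicit Defensive.
Import Order.TTheory GRing.Theory Num.Theory.
Local Open Scope ring_scope.

Section Defs.
Variable R : realType.

Definition simple_graph N E (src tgt : 'I_E -> 'I_N) : Prop :=
  (forall e, src e != tgt e) /\
  (forall e f, [set src e; tgt e] = [set src f; tgt f] -> e = f).

Definition adj N E (src tgt : 'I_E -> 'I_N) : rel 'I_N :=
  fun i j => [exists e, ((src e == i) && (tgt e == j)) || ((src e == j) && (tgt e == i))].

Definition graph_connected N E (src tgt : 'I_E -> 'I_N) : Prop :=
  forall i j, connect (adj src tgt) i j.

Definition incidence N E (src tgt : 'I_E -> 'I_N) : 'M[R]_(N, E) :=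
  \matrix_(i, e) ((i == src e)%:R - (i == tgt e)%:R).

Definition Gam E (B : 'I_E -> R) : 'M[R]_E := diag_mx (\row_e B e).

Definition LapB N E (src tgt : 'I_E -> 'I_N) (B : 'I_E -> R) : 'M[R]_N :=
  incidence src tgt *m Gam B *m (incidence src tgt)^T.

Definition Mmx N (m : 'I_N -> R) : 'M[R]_N := diag_mx (\row_i m i).
Definition Msqrt N (m : 'I_N -> R) : 'M[R]_N := diag_mx (\row_i Num.sqrt (m i)).
Definition Minvsqrt N (m : 'I_N -> R) : 'M[R]_N := diag_mx (\row_i (Num.sqrt (m i))^-1).

(* columns of Y form an orthonormal basis of the null space of 1^T M^{1/2}
   (that null space has dimension N-1, so N-1 orthonormal vectors in it
   form a basis) *)
Definition Y_ok N (m : 'I_N -> R) (Y : 'M[R]_(N, N.-1)) : Prop :=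
  Y^T *m Y = 1%:M /\ const_mx 1 *m Msqrt m *m Y = (0 : 'M[R]_(1, N.-1)).

Definition phase N E (src tgt : 'I_E -> 'I_N) (m : 'I_N -> R)
  (Y : 'M[R]_(N, N.-1)) (th : 'cV[R]_(N.-1)) : 'cV[R]_E :=
  (incidence src tgt)^T *m Minvsqrt m *m Y *m th.

Definition Upot N E (src tgt : 'I_E -> 'I_N) (B : 'I_E -> R) (m : 'I_N -> R)
  (Y : 'M[R]_(N, N.-1)) (th : 'cV[R]_(N.-1)) : R :=
  - \sum_(e < E) B e * cos (phase src tgt m Y th e 0).

(* Hessian of U, as given in the paper:
   Y^T M^{-1/2} A diag(Gamma cos(A^T M^{-1/2} Y theta)) A^T M^{-1/2} Y *)
Definition hessU N E (src tgt : 'I_E -> 'I_N) (B : 'I_E -> R) (m : 'I_N -> R)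
  (Y : 'M[R]_(N, N.-1)) (th : 'cV[R]_(N.-1)) : 'M[R]_(N.-1) :=
  Y^T *m Minvsqrt m *m incidence src tgt
  *m diag_mx (\row_e (B e * cos (phase src tgt m Y th e 0)))
  *m (incidence src tgt)^T *m Minvsqrt m *m Y.

Definition Sset N E (src tgt : 'I_E -> 'I_N) (m : 'I_N -> R)
  (Y : 'M[R]_(N, N.-1)) (rho : R) (th : 'cV[R]_(N.-1)) : Prop :=
  forall l : 'I_E, `|phase src tgt m Y th l 0| < pi / 2 - rho.

Definition loewner_le n (P Q : 'M[R]_n) : Prop :=
  forall x : 'cV[R]_n, 0 <= (x^T *m (Q - P) *m x) 0 0.

Definition sorted_spectrum n (A : 'M[R]_n) (s : seq R) : Prop :=
  sorted <=%R s /\ char_poly A = \prod_(x <- s) ('X - x%:P).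

End Defs.

(* Main.v *)
Require Import Defs.
From HB Require Import structures.
From mathcomp Require Import all_boot all_order all_algebra.
From mathcomp Require Import reals trigo.
From mathcomp Require Import complex ring lra.
Import Order.TTheory GRing.Theory Num.Theory.
Local Open Scope ring_scope.

Lemma char_poly_simil (F : comUnitRingType) n (A P : 'M[F]_n) :
  P \in unitmx -> char_poly (invmx P *m A *m P) = char_poly A.
Proof.
move=> Pu.
have E : char_poly_mx (invmx P *m A *m P) =
   map_mx polyC (invmx P) *m char_poly_mx A *m map_mx polyC P.
  rewrite /char_poly_mx mulmxBr mulmxBl -!map_mxM.
  congr (_ - _).
  by rewrite mul_mx_scalar -scalemxAl -map_mxM mulVmx // map_mx1 scalemx1.
rewrite /char_poly E !det_mulmx !det_map_mx mulrC mulrA -rmorphM.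
by rewrite -det_mulmx mulmxV // det1 rmorph1 mul1r.
Qed.

Section Core.
Variable R : rcfType.
Local Notation C := (R[i]).
Local Notation f := (real_complex R).

Lemma conjf (r : R) : ((f r)^* = f r)%R.
Proof. exact: conjc_real. Qed.

Lemma rayleigh n (T : 'M[R]_n) (s : seq R) (a : R) :
 T^T = T -> char_poly T = \prod_(x <- s) ('X - x%:P) ->
 forall x : 'cV[R]_n,
  ({in s, forall r, a <= r} -> a * (x^T *m x) 0 0 <= (x^T *m T *m x) 0 0) /\
  ({in s, forall r, r <= a} -> (x^T *m T *m x) 0 0 <= a * (x^T *m x) 0 0).
Proof.
move=> Tsym Tchar x.
set TC := map_mx f T.
have TCh : TC \is hermsymmx.
  apply/is_hermitianmxP; rewrite expr0 scale1r.
  apply/matrixP => i j; rewrite !mxE conjf.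
  by rewrite -[in LHS]Tsym mxE.
have /orthomx_spectralP TCE := hermitian_normalmx TCh.
set P := spectralmx TC in TCE.
set d := spectral_diag TC in TCE.
have Pu : P \is unitarymx by exact: spectral_unitarymx.
have Pinv := invmx_unitary Pu.
have Punit := unitarymx_unit Pu.
have dE : forall i, exists2 r, r \in s & d 0 i = f r.
  move=> i.
  have : root (char_poly TC) (d 0 i).
    rewrite TCE char_poly_simil // char_poly_trig ?diag_mx_is_trig //.
    rewrite -(big_map (fun i => diag_mx d i i) predT (fun a => 'X - a%:P)).
    rewrite root_prod_XsubC; apply/mapP; exists i; first by rewrite mem_index_enum.
    by rewrite mxE eqxx mulr1n.
  rewrite -map_char_poly Tchar rmorph_prod /=.
  under eq_bigr do rewrite map_polyXsubC.
  rewrite -(big_map f predT (fun a => 'X - a%:P)) root_prod_XsubC => /mapP [r rs ->]; by exists r.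
set xC := map_mx f x.
set y := P *m xC.
have xCc : (xC ^t*)%sesqui = xC^T.
  by apply/matrixP => i j; rewrite !mxE conjf.
have yc : (y ^t*)%sesqui = xC^T *m (P ^t*)%sesqui.
  rewrite /y trmx_mul map_mxM; congr (_ *m _); apply/matrixP => i j; rewrite !mxE; exact: conjf.
have Q1 : f ((x^T *m T *m x) 0 0) = \sum_i (y i 0)^* * d 0 i * y i 0.
  rewrite (_ : f _ = map_mx f (x^T *m T *m x) 0 0); last by rewrite [RHS]mxE.
  rewrite !map_mxM -map_trmx -/xC -/TC TCE Pinv.
  rewrite !mulmxA -yc -!mulmxA -/y mxE.
  apply: eq_bigr => i _; by rewrite mul_diag_mx !mxE mulrA.
have Q2 : f ((x^T *m x) 0 0) = \sum_i (y i 0)^* * y i 0.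
  rewrite (_ : f _ = map_mx f (x^T *m x) 0 0); last by rewrite [RHS]mxE.
  rewrite !map_mxM -map_trmx -/xC.
  rewrite -[xC in _ *m xC]mul1mx -(mulVmx Punit) Pinv !mulmxA -yc -mulmxA -/y mxE.
  apply: eq_bigr => i _; by rewrite !mxE.
split => H.
- rewrite -lecR rmorphM /= Q1 Q2 mulr_sumr -subr_ge0 -sumrB sumr_ge0 // => i _.
  have [r rs ->] := dE i.
  set c := _^*; set yy := y i 0.
  have -> : c * f r * yy - f a * (c * yy) = f (r - a) * (yy * c).
    rewrite rmorphB /=; ring.
  apply: mulr_ge0; last by rewrite mul_conjC_ge0.
  by rewrite ler0c subr_ge0 H.
- rewrite -lecR rmorphM /= Q1 Q2 mulr_sumr -subr_ge0 -sumrB sumr_ge0 // => i _.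
  have [r rs ->] := dE i.
  set c := _^*; set yy := y i 0.
  have -> : f a * (c * yy) - c * f r * yy = f (a - r) * (yy * c).
    rewrite rmorphB /=; ring.
  apply: mulr_ge0; last by rewrite mul_conjC_ge0.
  by rewrite ler0c subr_ge0 H.
Qed.
End Core.

Section Main.
Variable R : realType.

Lemma qform_diag E (z : 'cV[R]_E) (c : 'rV[R]_E) :
  (z^T *m diag_mx c *m z) 0 0 = \sum_e c 0 e * (z e 0)^+2.
Proof.
rewrite mul_mx_diag mxE; apply: eq_bigr => e _; rewrite !mxE; ring.
Qed.

Lemma qform_comp k l (x : 'cV[R]_k) (W : 'M[R]_(l, k)) (D : 'M[R]_l) :
  x^T *m (W^T *m D *m W) *m x = (W *m x)^T *m D *m (W *m x).
Proof. by rewrite trmx_mul !mulmxA. Qed.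

Lemma inv_of_mul1 k (A B : 'M[R]_k) : A *m B = 1%:M -> invmx A = B.
Proof.
move=> h; have [Au _] := mulmx1_unit h.
by rewrite -[invmx A]mulmx1 -h mulmxA mulVmx // mul1mx.
Qed.

Lemma sum_delta k (j : 'I_k) : \sum_i ((i == j)%:R : R) = 1.
Proof. by rewrite (bigD1 j) //= eqxx big1 ?addr0 // => i /negPf ->. Qed.

Lemma path_le_last (x : R) t : path <=%R x t -> forall r, r \in x :: t -> r <= last x t.
Proof.
elim: t x => [|y t IH] x /=; first by move=> _ r; rewrite inE => /eqP ->.
move=> /andP [xy pt] r; rewrite inE => /orP [/eqP -> | rin].
  by apply: le_trans xy (IH _ pt _ _); rewrite inE eqxx.
exact: IH.
Qed.

Lemma char_poly_block n (K : 'M[R]_n) :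
  char_poly (block_mx (0 : 'M_1) 0 0 K) = 'X * char_poly K.
Proof.
rewrite /char_poly /char_poly_mx (scalar_mx_block 1 n) map_block_mx.
rewrite opp_block_mx add_block_mx !map_mx0 !oppr0 !addr0 det_ublock.
by rewrite det_scalar1.
Qed.


Lemma mainlem n E (src tgt : 'I_E -> 'I_n.+1)
  (B : 'I_E -> R) (m : 'I_n.+1 -> R) (Y : 'M[R]_(n.+1, n)) (s : seq R) :
  (forall e, 0 < B e) ->
  (forall i, 0 < m i) ->
  Y_ok m Y ->
  sorted_spectrum (invmx (Mmx m) *m LapB src tgt B) s ->
  forall (rho : R), 0 < rho -> rho < pi / 2 ->
  forall th : 'cV[R]_n, Sset src tgt m Y rho th ->
    loewner_le ((sin rho * nth 0 s 1) *: 1%:M) (hessU src tgt B m Y th) /\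
    loewner_le (hessU src tgt B m Y th) (last 0 s *: 1%:M).
Proof.
move=> Bpos mpos [YY Y1] [ssort sspec] rho rho0 rhopi th thS.
set Ai := incidence R src tgt.
set Mi := Minvsqrt m.
set Ms := Msqrt m.
set G := Gam B.
have sqpos : forall i, 0 < Num.sqrt (m i) by move=> i; rewrite sqrtr_gt0.
have MiMs : Mi *m Ms = 1%:M.
  rewrite /Mi /Ms /Minvsqrt /Msqrt mulmx_diag -diag_const_mx; congr diag_mx.
  by apply/rowP => j; rewrite !mxE mulVf // gt_eqF.
have MsMi : Ms *m Mi = 1%:M.
  rewrite /Mi /Ms /Minvsqrt /Msqrt mulmx_diag -diag_const_mx; congr diag_mx.
  by apply/rowP => j; rewrite !mxE mulfV // gt_eqF.
have MiT : Mi^T = Mi by rewrite tr_diag_mx.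
have MsT : Ms^T = Ms by rewrite tr_diag_mx.
have GT : G^T = G by rewrite tr_diag_mx.
set S := Mi *m (Ai *m G *m Ai^T) *m Mi.
have ST : S^T = S by rewrite /S !trmx_mul !trmxK MiT GT !mulmxA.
have Sspec : char_poly S = \prod_(x <- s) ('X - x%:P).
  rewrite -sspec.
  have MM : Mmx m = Ms *m Ms.
    rewrite /Ms /Msqrt /Mmx mulmx_diag; congr diag_mx.
    by apply/rowP => j; rewrite !mxE -expr2 sqr_sqrtr // ltW.
  have iM : invmx (Mmx m) = Mi *m Mi.
    apply: inv_of_mul1; rewrite MM -mulmxA [Ms *m (Mi *m Mi)]mulmxA MsMi mul1mx MsMi //.
  have iMs : invmx Ms = Mi by apply: inv_of_mul1.
  have [Msu _] := mulmx1_unit MsMi.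
  rewrite -(@char_poly_simil _ _ S _ Msu) iMs /S /LapB -/Ai -/G iM.
  by rewrite -!mulmxA MiMs mulmx1.
have Aone : Ai^T *m (const_mx 1 : 'cV[R]_n.+1) = 0.
  apply/matrixP => e j; rewrite !mxE.
  under eq_bigr do rewrite !mxE mulr1.
  by rewrite sumrB !sum_delta subrr.
set v : 'cV[R]_n.+1 := Ms *m const_mx 1.
have Sv : S *m v = 0.
  by rewrite /S /v -!mulmxA (mulmxA Mi Ms) MiMs mul1mx Aone !mulmx0.
have Yv : Y^T *m v = 0.
  have := congr1 trmx Y1; rewrite !trmx_mul MsT trmx_const trmx0.
  by [].
have vv : (v^T *m v) 0 0 = \sum_i m i.
  rewrite mxE; apply: eq_bigr => i _.
  rewrite /v /Ms /Msqrt mul_diag_mx !mxE mulr1 -expr2 sqr_sqrtr //.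
  exact: ltW.
set c := Num.sqrt (\sum_i m i).
have sum_pos : 0 < \sum_i m i.
  rewrite big_ord_recl; apply: (lt_le_trans (mpos ord0)).
  by rewrite lerDl; apply: sumr_ge0 => i _; apply: ltW.
have cpos : 0 < c by rewrite sqrtr_gt0.
set u := c^-1 *: v.
have uu : u^T *m u = 1%:M.
  apply/matrixP => i j; rewrite !ord1 /u !linearZ /= -scalemxAl. rewrite scalerA mxE vv mxE eqxx.
  rewrite mulr1n -(sqr_sqrtr (ltW sum_pos)) -/c; field.
  by rewrite gt_eqF.
have Su : S *m u = 0 by rewrite /u -scalemxAr Sv scaler0.
have Yu : Y^T *m u = 0 by rewrite /u -scalemxAr Yv scaler0.
have uS : u^T *m S = 0 by rewrite -ST -trmx_mul Su trmx0.
have uY : u^T *m Y = 0 by rewrite -[Y]trmxK -trmx_mul Yu trmx0.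
set K := Y^T *m S *m Y.
set Q : 'M[R]_(n.+1, 1 + n) := row_mx u Y.
have QQ : Q^T *m Q = 1%:M.
  rewrite /Q tr_row_mx mul_col_row uu uY Yu YY.
  by rewrite [RHS](scalar_mx_block 1 n).
have QS : Q^T *m S *m Q = block_mx 0 0 0 K.
  by rewrite /Q tr_row_mx mul_col_mx mul_col_row uS !mul0mx -(mulmxA _ S u) Su mulmx0.
have charK : char_poly S = 'X * char_poly K.
  have QQ' := mulmx1C QQ.
  have iQ : invmx Q = Q^T by apply: inv_of_mul1.
  have [Qu _] := mulmx1_unit QQ'.
  rewrite -(@char_poly_simil _ _ S _ Qu) iQ QS.
  exact: char_poly_block.
have qS : forall w : 'rV[R]_n.+1, 0 <= (w *m S *m w^T) 0 0.
  move=> w; set z := (w *m Mi *m Ai)^T.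
  have -> : w *m S *m w^T = z^T *m G *m z.
    by rewrite /z trmxK !trmx_mul MiT /S !mulmxA.
  rewrite qform_diag; apply: sumr_ge0 => e _; rewrite mxE.
  by apply: mulr_ge0; [apply: ltW | apply: sqr_ge0].
have s_ge0 : {in s, forall r, 0 <= r}.
  move=> r rs; have : root (char_poly S) r by rewrite Sspec root_prod_XsubC.
  rewrite -eigenvalue_root_char => /eigenvalueP [w wS w0].
  have E1 : (w *m S *m w^T) 0 0 = r * (w *m w^T) 0 0.
    by rewrite wS -scalemxAl mxE.
  have [j wj] : exists j, w 0 j != 0.
    apply/existsP; apply: contraR w0 => /existsPn H.
    by apply/eqP/rowP => j; rewrite mxE; apply/eqP; move: (H j); rewrite negbK.
  have wpos : 0 < (w *m w^T) 0 0.
    rewrite mxE (bigD1 j) //= mxE -expr2; apply: (@lt_le_trans _ _ (w 0 j ^+ 2)).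
      by rewrite lt_def sqr_ge0 andbT sqrf_eq0.
    by rewrite lerDl; apply: sumr_ge0 => i _; rewrite mxE -expr2 sqr_ge0.
  by rewrite -(pmulr_lge0 _ wpos) -E1 qS.
have s0 : 0 \in s.
  by rewrite -root_prod_XsubC -Sspec charK rootM rootX eqxx.
have sE : s = 0 :: behead s.
  case: s ssort s0 s_ge0 {sspec Sspec} => [//|x t] /= pt.
  rewrite inE => /orP [/eqP <- //| t0] xge0.
  have x0 : 0 <= x by apply: xge0; rewrite inE eqxx.
  have := order_path_min le_trans pt => /allP /(_ _ t0) x0'.
  by congr (_ :: _); apply/eqP; rewrite eq_le x0 x0'.
set t := behead s in sE.
have Kspec : char_poly K = \prod_(x <- t) ('X - x%:P).
  apply: (@mulfI _ 'X); first by rewrite polyX_eq0.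
  by rewrite -charK Sspec sE big_cons subr0.
have tsort : sorted <=%R t by move: ssort; rewrite sE /=; apply: path_sorted.
have lam2 : {in t, forall r, nth 0 s 1 <= r}.
  rewrite sE /=; case: (t) tsort => [//|y t'] /= pt r.
  rewrite inE => /orP [/eqP -> //| rt].
  by have := order_path_min le_trans pt => /allP /(_ _ rt).
have lamN : {in s, forall r, r <= last 0 s}.
  move=> r rs; rewrite sE /=; apply: path_le_last; last by rewrite -sE.
  by rewrite -/(sorted _ (0 :: t)) -sE.
have pi0 := @pi_gt0 R.
have sin0 : 0 <= sin rho by apply: ltW; apply: sin_gt0_pihalf; rewrite rho0 rhopi.
set ph := phase src tgt m Y th.
have cosb : forall e, sin rho <= cos (ph e 0).
  move=> e; rewrite -cos_norm.
  have h := thS e; rewrite -/ph in h.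
  have -> : sin rho = cos (pi/2 - rho) by rewrite -cosN opprB cosBpihalf.
  apply: ltW; rewrite ltr_cos //; rewrite in_itv /= ?normr_ge0 /=.
  - lra.
  - apply/andP; split; lra.
have cos1 : forall e, cos (ph e 0) <= 1 by move=> e; apply: cos_le1.
set W := Ai^T *m Mi *m Y.
have Hq : forall x : 'cV[R]_n, (x^T *m hessU src tgt B m Y th *m x) 0 0 =
    \sum_e (B e * cos (ph e 0)) * ((W *m x) e 0)^+2.
  move=> x.
  have -> : hessU src tgt B m Y th = W^T *m diag_mx (\row_e (B e * cos (ph e 0))) *m W.
    by rewrite /hessU -/Ai -/Mi /W !trmx_mul trmxK MiT !mulmxA.
  rewrite qform_comp.
  rewrite qform_diag; apply: eq_bigr => e _; by rewrite mxE.
have Kq : forall x : 'cV[R]_n, (x^T *m K *m x) 0 0 = \sum_e B e * ((W *m x) e 0)^+2.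
  move=> x.
  have -> : K = W^T *m G *m W by rewrite /K /S /W !trmx_mul trmxK MiT !mulmxA.
  rewrite qform_comp.
  rewrite qform_diag; apply: eq_bigr => e _; by rewrite mxE.
have KT : K^T = K by rewrite /K trmx_mul trmx_mul ST trmxK mulmxA.
have sub00 : forall k (A C : 'M[R]_k) (x : 'cV[R]_k),
    (x^T *m (A - C) *m x) 0 0 = (x^T *m A *m x) 0 0 - (x^T *m C *m x) 0 0.
  have e00 : forall P1 P2 : 'M[R]_1, (P1 - P2) 0 0 = P1 0 0 - P2 0 0 by move=> P1 P2; rewrite !mxE.
  by move=> k A C x; rewrite mulmxBr mulmxBl e00.
have qsc : forall k (x : 'cV[R]_k) a, (x^T *m (a *: 1%:M) *m x) 0 0 = a * (x^T *m x) 0 0.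
  by move=> k x a; rewrite scalemx1 mul_mx_scalar -scalemxAl mxE.
split => x; rewrite sub00 qsc subr_ge0.
- apply: (@le_trans _ _ (sin rho * (x^T *m K *m x) 0 0)).
    rewrite -mulrA ler_wpM2l //.
    exact: (proj1 (@rayleigh _ _ _ _ _ KT Kspec x) lam2).
  rewrite Kq Hq mulr_sumr; apply: ler_sum => e _.
  rewrite -subr_ge0.
  set z2 := _ ^+ 2.
  have -> : B e * cos (ph e 0) * z2 - sin rho * (B e * z2) = B e * (cos (ph e 0) - sin rho) * z2 by ring.
  apply: mulr_ge0; last exact: sqr_ge0.
  by apply: mulr_ge0; [apply: ltW | rewrite subr_ge0].
- apply: (@le_trans _ _ ((x^T *m K *m x) 0 0)).
    rewrite Kq Hq; apply: ler_sum => e _.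
    rewrite -subr_ge0.
    set z2 := _ ^+ 2.
    have -> : B e * z2 - B e * cos (ph e 0) * z2 = B e * (1 - cos (ph e 0)) * z2 by ring.
    apply: mulr_ge0; last exact: sqr_ge0.
    by apply: mulr_ge0; [apply: ltW | rewrite subr_ge0].
  have -> : x^T *m K *m x = (Y *m x)^T *m S *m (Y *m x) by rewrite /K trmx_mul !mulmxA.
  have xx : (Y *m x)^T *m (Y *m x) = x^T *m x.
    by rewrite trmx_mul -mulmxA (mulmxA Y^T) YY mul1mx.
  rewrite -xx.
  exact: (proj2 (@rayleigh _ _ _ _ _ ST Sspec (Y *m x)) lamN).
Qed.

End Main.

Theorem lemmaD2 (R : realType) (N E : nat) (src tgt : 'I_E -> 'I_N)
  (B : 'I_E -> R) (m : 'I_N -> R) (Y : 'M[R]_(N, N.-1)) (s : seq R) :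
  (1 < N)%N ->
  simple_graph src tgt ->
  graph_connected src tgt ->
  (forall e, 0 < B e) ->
  (forall i, 0 < m i) ->
  Y_ok m Y ->
  sorted_spectrum (invmx (Mmx m) *m LapB src tgt B) s ->
  forall (rho : R), 0 < rho -> rho < pi / 2 ->
  forall th : 'cV[R]_(N.-1), Sset src tgt m Y rho th ->
    loewner_le ((sin rho * nth 0 s 1) *: 1%:M) (hessU src tgt B m Y th) /\
    loewner_le (hessU src tgt B m Y th) (last 0 s *: 1%:M).
Proof.
move: N src tgt m Y => [|n] src tgt m Y hN _ _; first by [].
exact: mainlem.
Qed.
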